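(* Consider a rule of the PJR-Exact family run on $(\mathcal{A},k)$, and fix $j$ with $1\le j\le k$ such that iterations $1,\dots,j$ are all normal. Then for every candidate $c\in C\setminus W_j$ with $\ell_j(c)\ge1$, $$\sum_{i\in N:\ c\in A_i,\ |A_i\cap W_j|<\ell_j(c)}\left(f_i^j-\frac{\ell_j(c)-|A_i\cap W_j|-1}{\ell_j(c)}\right)\ \ge\ q.$$
   Context: Setting: voters $N=\{1,\dots,n\}$, candidates $C=\{c_1,\dots,c_m\}$, approval ballots $A_i\subseteq C$, $\mathcal{A}=(A_1,\dots,A_n)$, $k$ a positive integer with $k\le|C|$, $q=n/k$, $N_c=\{i: c\in A_i\}$. Convention: $\max\emptyset=0$. Dissatisfaction level: for $W\subseteq C$ with $|W|\le k$ and $c\in C\setminus W$, $\ell(c,W)$ is the largest nonnegative integer $\ell$ with $\ell=\lfloor \frac{k}{n}|\{i\in N: c\in A_i,\ |A_i\cap W|<\ell\}|\rfloor$. PJR-Exact family: iterative procedures selecting $w_1,\dots,w_k$, $W_0=\emptyset$, $W_j=W_{j-1}\cup\{w_j\}$, $w_j\notin W_{j-1}$, with vote fractions $f_i^0=1$, $0\le f_i^j\le f_i^{j-1}$, such that at each iteration $j$: (a) $f_i^j=f_i^{j-1}$ for $i\notin N_{w_j}$; (b) with $s=\sum_{i\in N_{w_j}}f_i^{j-1}$, if $s>q$ then $\sum_{i\in N_{w_j}}(f_i^{j-1}-f_i^j)=q$, and if $s\le q$ then $f_i^j=0$ for all $i\in N_{w_j}$; (c) if some $c\in C\setminus W_{j-1}$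 has $\sum_{i\in N_c}f_i^{j-1}\ge q$ then $\sum_{i\in N_{w_j}}f_i^{j-1}\ge q$. Notation along a run: $\ell_j(c)=\ell(c,W_j)$ for $c\in C\setminus W_j$; for $c\in C\setminus W_j$ and $i\in N_c$, $\ell_j(i,c)=\max_{c'\in A_i\setminus(W_j\cup\{c\})}\ell_j(c')$; $g_i^j(c)=0$ if $\ell_j(i,c)\le|A_i\cap W_j|$ and $g_i^j(c)=\frac{\ell_j(i,c)-|A_i\cap W_j|-1}{\ell_j(i,c)}$ otherwise. Normal state: $c\in C\setminus W_j$ is in normal state after $j$ iterations if (1) for each $i\in N_c$ with $\ell_j(i,c)>|A_i\cap W_j|$ we have $f_i^j\ge\frac{\ell_j(i,c)-|A_i\cap W_j|}{\ell_j(i,c)}$, and (2) $\sum_{i\in N_c}(f_i^j-g_i^j(c))\ge q$. Normal iteration: iteration $j$ ($1\le j\le k$) is normal if $w_j$ is in normal state after $j-1$ iterations and, for each $i\in N_{w_j}$ with $\ell_{j-1}(i,w_j)>|A_i\cap W_{j-1}|$, $f_i^j\ge\frac{\ell_{j-1}(i,w_j)-|A_i\cap W_j|}{\ell_{j-1}(i,w_j)}$. *)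

(* Defs.v *)
From HB Require Import structures.
From mathcomp Require Import all_boot all_order all_algebra.
Set Implicit Arguments. Unset Strict Implicit. Unset Printing Implicit Defensive.
Import Order.TTheory GRing.Theory Num.Theory.

(* Voters: finite type V (n = #|V|); candidates: finite type C (m = #|C|);
   approval ballots A : V -> {set C}; committee size k. *)

Section PJR.
Variables (V C : finType) (A : V -> {set C}) (k : nat).

Definition supporters (c : C) : {set V} := [set i | c \in A i].

Definition dcount (c : C) (W : {set C}) (l : nat) : nat :=
  #|[set i | (c \in A i) && (#|A i :&: W| < l)%N]|.

(* l(c,W): largest l >= 0 with l = floor(k/n * dcount c W l)
   = (k * dcount c W l) %/ n.  Any such l is <= k (dcount <= n), and l = 0
   always qualifies, so searching l in [0,k] gives exactly the largest one. *)
Definition dlevel (c : C) (W : {set C}) : nat :=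
  \max_(l < k.+1 | nat_of_ord l == ((k * dcount c W l) %/ #|V|)%N) nat_of_ord l.

Definition Wset (w : nat -> C) (j : nat) : {set C} :=
  \bigcup_(1 <= t < j.+1) [set w t].

Definition ilevel (W : {set C}) (i : V) (c : C) : nat :=
  \max_(c' in A i :\: (W :|: [set c])) dlevel c' W.

Variable R : realFieldType.
Local Open Scope ring_scope.

Definition quota : R := (#|V|%:R) / (k%:R).

Definition gfun (W : {set C}) (i : V) (c : C) : R :=
  let L := ilevel W i c in
  let a := #|A i :&: W| in
  if (L <= a)%N then 0 else (L%:R - a%:R - 1) / L%:R.

Definition normal_state (fj : V -> R) (W : {set C}) (c : C) : Prop :=
  (forall i, c \in A i -> (#|A i :&: W| < ilevel W i c)%N ->
     ((ilevel W i c)%:R - (#|A i :&: W|)%:R) / (ilevel W i c)%:R <= fj i) /\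
  quota <= \sum_(i | c \in A i) (fj i - gfun W i c).

(* A run of a PJR-Exact rule: winners w_1..w_k (w : nat -> C, only indices
   1..k matter) and vote fractions f^0..f^k (f : nat -> V -> R). *)
Definition pjr_exact_run (w : nat -> C) (f : nat -> V -> R) : Prop :=
  (forall i, f 0%N i = 1) /\
  forall j : nat, (1 <= j <= k)%N ->
    [/\ w j \notin Wset w j.-1,
        (forall i, 0 <= f j i /\ f j i <= f j.-1 i),
        (forall i, w j \notin A i -> f j i = f j.-1 i),
        (quota < \sum_(i | w j \in A i) f j.-1 i ->
           \sum_(i | w j \in A i) (f j.-1 i - f j i) = quota) /\
        (\sum_(i | w j \in A i) f j.-1 i <= quota ->
           forall i, w j \in A i -> f j i = 0)
      &
        ((exists c, c \notin Wset w j.-1 /\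
                    quota <= \sum_(i | c \in A i) f j.-1 i) ->
         quota <= \sum_(i | w j \in A i) f j.-1 i)].

Definition normal_iteration (w : nat -> C) (f : nat -> V -> R) (j : nat) : Prop :=
  normal_state (f j.-1) (Wset w j.-1) (w j) /\
  forall i, w j \in A i ->
    (#|A i :&: Wset w j.-1| < ilevel (Wset w j.-1) i (w j))%N ->
    ((ilevel (Wset w j.-1) i (w j))%:R - (#|A i :&: Wset w j|)%:R)
      / (ilevel (Wset w j.-1) i (w j))%:R <= f j i.

End PJR.

(* Main.v *)
Require Import Defs.
From HB Require Import structures.
From mathcomp Require Import all_boot all_order all_algebra.
From mathcomp Require Import ring lra.
Import Order.TTheory GRing.Theory Num.Theory.

Section Aux.
Variables (V C : finType) (A : V -> {set C}) (k : nat).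
Hypothesis hn : (0 < #|V|)%N.

Lemma dcount_mono_l c W l1 l2 : (l1 <= l2)%N -> (dcount A c W l1 <= dcount A c W l2)%N.
Proof.
move=> hl; apply: subset_leq_card; apply/subsetP => i; rewrite !inE.
by case/andP => -> h; apply: leq_trans h hl.
Qed.

Lemma dcount_mono_W c (W1 W2 : {set C}) l : W1 \subset W2 -> (dcount A c W2 l <= dcount A c W1 l)%N.
Proof.
move=> hW; apply: subset_leq_card; apply/subsetP => i; rewrite !inE.
case/andP => -> h /=; apply: leq_ltn_trans h.
by apply: subset_leq_card; apply: setIS.
Qed.

Lemma h_le_k c W m : ((k * dcount A c W m) %/ #|V| <= k)%N.
Proof.
apply: (@leq_trans ((k * #|V|) %/ #|V|)); last by rewrite mulnK.
by apply: leq_div2r; rewrite leq_mul2l max_card orbT.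
Qed.

Lemma dlevel_spec c W :
  dlevel A k c W = ((k * dcount A c W (dlevel A k c W)) %/ #|V|)%N /\ (dlevel A k c W <= k)%N.
Proof.
rewrite /dlevel.
case: (@eq_bigmax_cond _ [pred l : 'I_k.+1 | nat_of_ord l == ((k * dcount A c W l) %/ #|V|)%N]
   (fun l => nat_of_ord l)).
  apply/card_gt0P; exists ord0; rewrite inE /= /dcount.
  apply/eqP; rewrite (_ : [set _ | _] = set0) ?cards0 ?muln0 ?div0n //.
  by apply/setP => i; rewrite !inE ltn0 andbF.
move=> i0; rewrite inE => /eqP hi0 ->; split; last by rewrite -ltnS ltn_ord.
by rewrite {1}hi0.
Qed.

Lemma dlevel_mono c (W1 W2 : {set C}) : W1 \subset W2 -> (dlevel A k c W2 <= dlevel A k c W1)%N.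
Proof.
move=> hW.
have [hl0 hl0k] := dlevel_spec c W2.
set l0 := dlevel A k c W2 in hl0 hl0k *.
pose h m := ((k * dcount A c W1 m) %/ #|V|)%N.
have hmono : forall a b, (a <= b)%N -> (h a <= h b)%N.
  by move=> a b hab; apply: leq_div2r; rewrite leq_mul2l dcount_mono_l ?orbT.
pose P m := [&& (l0 <= m)%N, (m <= k)%N & (m <= h m)%N].
have exP : exists m, P m.
  exists l0; rewrite /P leqnn hl0k /=.
  rewrite {1}hl0; apply: leq_div2r; rewrite leq_mul2l dcount_mono_W ?orbT //.
have ubP : forall m, P m -> (m <= k)%N by move=> m /and3P [].
case: (ex_maxnP exP ubP) => m /and3P [h1 h2 h3] hmax.
have hhm : h m = m.
  apply/eqP; rewrite eqn_leq h3 andbT; apply: hmax.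
  by rewrite /P (leq_trans h1 h3) h_le_k hmono.
have hmk : (m < k.+1)%N by [].
apply: leq_trans h1 _.
rewrite /dlevel.
apply: (@leq_bigmax_cond _ [pred l : 'I_k.+1 | nat_of_ord l == ((k * dcount A c W1 l) %/ #|V|)%N]
   (fun l => nat_of_ord l) (Ordinal hmk)).
by rewrite /= -/(h m) hhm.
Qed.

End Aux.

Lemma Wset_S (C : finType) (w : nat -> C) t : Wset w t.+1 = w t.+1 |: Wset w t.
Proof. by rewrite /Wset big_nat_recr //= setUC. Qed.

Lemma Wset_0 (C : finType) (w : nat -> C) : Wset w 0 = set0.
Proof. by rewrite /Wset big_geq. Qed.

Lemma Wset_mono (C : finType) (w : nat -> C) s t : (s <= t)%N -> Wset w s \subset Wset w t.
Proof.
elim: t => [|t IH]; first by rewrite leqn0 => /eqP ->.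
rewrite leq_eqVlt => /orP [/eqP -> //|]; rewrite ltnS => /IH h.
by rewrite Wset_S; apply: subset_trans h (subsetUr _ _).
Qed.

Lemma cardI_U1_in (V C : finType) (A : V -> {set C}) i (x : C) (W : {set C}) :
  x \in A i -> x \notin W -> #|A i :&: (x |: W)| = (#|A i :&: W|).+1.
Proof.
move=> hx hW.
have -> : A i :&: (x |: W) = x |: (A i :&: W).
  by apply/setP => y; rewrite !inE; case: eqP => [->|] //=; rewrite hx.
by rewrite cardsU1 inE (negbTE hW) andbF.
Qed.

Lemma cardI_U1_out (V C : finType) (A : V -> {set C}) i (x : C) (W : {set C}) :
  x \notin A i -> A i :&: (x |: W) = A i :&: W.
Proof.
move=> hx; apply/setP => y; rewrite !inE; case: eqP => [->|] //=.
by rewrite (negbTE hx).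
Qed.






Local Open Scope ring_scope.

Lemma ratio_mono (R : realFieldType) (l L a : nat) : (0 < l)%N -> (l <= L)%N ->
  ((l%:R - a%:R) / l%:R : R) <= (L%:R - a%:R) / L%:R.
Proof.
move=> hl hlL.
have hl' : (0 : R) < l%:R by rewrite ltr0n.
have hL' : (0 : R) < L%:R by rewrite ltr0n (leq_trans hl hlL).
have hle : (l%:R : R) <= L%:R by rewrite ler_nat.
rewrite ler_pdivrMr // mulrAC ler_pdivlMr //.
have ha : (0 : R) <= a%:R by rewrite ler0n.
nra.
Qed.

Theorem mainTheorem5 (R : realFieldType) (V C : finType) (A : V -> {set C})
  (k : nat) (hn : (0 < #|V|)%N) (hk : (0 < k)%N) (hkC : (k <= #|C|)%N)
  (w : nat -> C) (f : nat -> V -> R) :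
  pjr_exact_run A k w f ->
  forall j : nat, (1 <= j <= k)%N ->
  (forall t : nat, (1 <= t <= j)%N -> normal_iteration A k w f t) ->
  forall c : C, c \notin Wset w j ->
  (1 <= dlevel A k c (Wset w j))%N ->
  quota V k R <=
    \sum_(i | (c \in A i) && (#|A i :&: Wset w j| < dlevel A k c (Wset w j))%N)
      (f j i - ((dlevel A k c (Wset w j))%:R - (#|A i :&: Wset w j|)%:R - 1)
                 / (dlevel A k c (Wset w j))%:R).
Proof.
move=> [h0 hstep] j /andP [hj1 hjk] hnorm c hcW hl.
have [hl0eq hl0k] := @dlevel_spec _ _ A k c (Wset w j).
set W := Wset w j in hcW hl hl0eq hl0k *.
set l0 := dlevel A k c W in hl hl0eq hl0k *.
have hl0R : (l0%:R : R) != 0 by rewrite pnatr_eq0 -lt0n.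
have key : forall t, (t <= j)%N -> forall i, c \in A i ->
    (#|A i :&: Wset w t| < l0)%N ->
    (l0%:R - (#|A i :&: Wset w t|)%:R) / l0%:R <= f t i.
  elim => [_ i _ _| t IH htj i hci hlt].
    by rewrite Wset_0 setI0 cards0 h0 subr0 divff.
  have htk : (1 <= t.+1 <= k)%N by rewrite /= (leq_trans htj hjk).
  case: (hstep t.+1 htk) => hwn _ ha _ _.
  rewrite /= in hwn.
  have hWtj : Wset w t.+1 \subset W := Wset_mono _ w _ _ htj.
  case hwA : (w t.+1 \in A i); last first.
    rewrite ha ?hwA //.
    rewrite Wset_S (@cardI_U1_out _ _ A i (w t.+1) (Wset w t)) ?hwA // in hlt *.
    exact: IH (ltnW htj) i hci hlt.
  have htj' : (1 <= t.+1 <= j)%N by rewrite /= htj.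
  have [_ hni] := hnorm t.+1 htj'.
  rewrite /= in hni.
  set L := ilevel A k (Wset w t) i (w t.+1) in hni *.
  have hLl0 : (l0 <= L)%N.
    apply: leq_trans (@dlevel_mono _ _ A k hn c _ _ (Wset_mono _ w _ _ (ltnW htj))) _.
    rewrite /L /ilevel.
    apply: (@leq_bigmax_cond _ (fun c' => c' \in A i :\: (Wset w t :|: [set w t.+1]))
        (fun c' => dlevel A k c' (Wset w t)) c).
    rewrite !inE hci andbT negb_or; apply/andP; split.
      apply: contra hcW => h; apply: (subsetP (Wset_mono _ w _ _ (ltnW htj))); exact: h.
    apply/eqP => hc; move: hcW; rewrite hc => /negP; apply.
    by apply: (subsetP hWtj); rewrite Wset_S setU11.
  have hlt' := hlt; rewrite Wset_S (cardI_U1_in _ _ _ _ _ _ hwA hwn) in hlt'.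
  apply: le_trans (hni i hwA _); last by apply: leq_trans (ltnW hlt') hLl0.
  apply: ratio_mono => //.
rewrite (eq_bigl (fun i => i \in [set i | (c \in A i) && (#|A i :&: W| < l0)%N])); last first.
  by move=> i; rewrite inE.
apply: (@le_trans _ _ (\sum_(i in [set i | (c \in A i) && (#|A i :&: W| < l0)%N]) (l0%:R : R)^-1)).
  rewrite sumr_const; set d := #|_|; rewrite -(mulr_natl _ d).
  have hd : (l0 * #|V| <= k * dcount A c W l0)%N.
    by rewrite {1}hl0eq; apply: leq_divM.
  rewrite /quota /dcount in hd *.
  have hkR : (0 : R) < k%:R by rewrite ltr0n.
  have hlR : (0 : R) < l0%:R by rewrite ltr0n.
  rewrite ler_pdivrMr // mulrAC ler_pdivlMr //.
  move: hd; rewrite -(ler_nat R) !natrM -/d => hd.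
  by rewrite mulrC (mulrC d%:R).
apply: ler_sum => i; rewrite inE => /andP [hci hlt].
have := key j (leqnn j) i hci hlt.
rewrite lerBrDr => hf; apply: le_trans hf.
rewrite le_eqVlt; apply/orP; left; apply/eqP.
by field.
Qed.
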